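(* Let $m\in\mathbb N$ and let $(a_{\gamma,\delta})_{|\gamma|+|\delta|=m}$ be a family of complex numbers. If for some $\epsilon_0>0$ it holds that $\hat{\mathcal L}_{\epsilon_0}(\theta)\ne0$ for all $\theta\in\widehat\Lambda_{\epsilon_0}\setminus\{0\}$, then for every $\epsilon>0$ it holds that $\hat{\mathcal L}_\epsilon(\theta)\ne0$ for all $\theta\in\widehat\Lambda_\epsilon\setminus\{0\}$.
   Context: Fix a scaling $\mathfrak s\in\mathbb N^d$; for $\gamma\in\mathbb N_0^d$, $|\gamma|:=\sum_i\mathfrak s_i\gamma_i$. For $\epsilon>0$, $\widehat\Lambda_\epsilon:=\prod_{j=1}^d\mathbb R/(2\pi\epsilon^{-\mathfrak s_j}\mathbb Z)$ (the dual group of $\epsilon^{\mathfrak s_1}\mathbb Z\times\cdots\times\epsilon^{\mathfrak s_d}\mathbb Z$). For $\theta\in\widehat\Lambda_\epsilon$, $\xi^\epsilon_{\theta,j}:=i\epsilon^{-\mathfrak s_j}(1-e^{i\epsilon^{\mathfrak s_j}\theta_j})$, $(\xi^\epsilon_\theta)^\gamma:=\prod_j(\xi^\epsilon_{\theta,j})^{\gamma_j}$, and $\hat{\mathcal L}_\epsilon(\theta):=\sum_{|\gamma|+|\delta|=m}a_{\gamma,\delta}(i\xi^\epsilon_\theta)^\gamma(i\overline{\xi^\epsilon_\theta})^\delta$. *)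

(* Defs.v *)
From HB Require Import structures.
From mathcomp Require Import all_boot all_order all_algebra.
From mathcomp Require Import all_classical all_reals all_analysis.
From mathcomp Require Import complex.
Set Implicit Arguments. Unset Strict Implicit. Unset Printing Implicit Defensive.
Import Order.TTheory GRing.Theory Num.Theory.
Local Open Scope ring_scope.
Local Open Scope complex_scope.

Section Symbol.
Variables (R : realType) (d : nat) (s : 'I_d -> nat).

Definition expi (x : R) : R[i] := (cos x +i* sin x).

Definition mweight (g : 'I_d -> nat) : nat := (\sum_(i < d) s i * g i)%N.

(* theta represents 0 in the dual torus  prod_j R / (2 pi eps^{-s_j} Z) *)
Definition torus_zero (eps : R) (theta : 'I_d -> R) : Prop :=
  forall j : 'I_d, exists k : int, theta j = 2 * pi * eps ^- s j * k%:~R.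

Definition xi (eps : R) (theta : 'I_d -> R) (j : 'I_d) : R[i] :=
  'i * (eps ^- s j)%:C * (1 - expi (eps ^+ s j * theta j)).

(* hat L_eps(theta) = sum_{|g|+|h|=m} a_{g,h} (i xi)^g (i conj xi)^h.
   Multi-indices with |g|+|h| = m have entries <= m (as s_j >= 1), so
   they are enumerated as finite functions 'I_d -> 'I_m.+1. *)
Definition Lhat (m : nat) (a : ('I_d -> nat) -> ('I_d -> nat) -> R[i])
    (eps : R) (theta : 'I_d -> R) : R[i] :=
  \sum_(g : {ffun 'I_d -> 'I_m.+1})
   \sum_(h : {ffun 'I_d -> 'I_m.+1})
    if (mweight (fun i => nat_of_ord (g i)) + mweight (fun i => nat_of_ord (h i)) == m)%N
    then a (fun i => nat_of_ord (g i)) (fun i => nat_of_ord (h i))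
         * (\prod_(j < d) ('i * xi eps theta j) ^+ g j)
         * (\prod_(j < d) ('i * (xi eps theta j)^*) ^+ h j)
    else 0.
End Symbol.

(* Main.v *)
Require Import Defs.
From HB Require Import structures.
From mathcomp Require Import all_boot all_order all_algebra.
From mathcomp Require Import all_classical all_reals all_analysis.
From mathcomp Require Import complex.
From mathcomp Require Import ring lra.
Import Order.TTheory GRing.Theory Num.Theory.
Local Open Scope ring_scope.

Lemma alg1 (R : realType) (eps eps0 x : R) (n : nat) : 0 < eps -> 0 < eps0 ->
 eps ^+ n * x = eps0 ^+ n * ((eps0/eps) ^- n * x).
Proof.
move=> he he0.
have h1 : eps ^+ n != 0 by rewrite expf_neq0 // gt_eqF.
have h2 : eps0 ^+ n != 0 by rewrite expf_neq0 // gt_eqF.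
rewrite expr_div_n; field; rewrite ?mulf_neq0 ?expf_neq0 ?gt_eqF //.
Qed.

Lemma alg2 (R : realType) (eps eps0 : R) (n : nat) : 0 < eps -> 0 < eps0 ->
 eps ^- n = (eps0/eps) ^+ n * eps0 ^- n.
Proof.
move=> he he0.
have h1 : eps ^+ n != 0 by rewrite expf_neq0 // gt_eqF.
have h2 : eps0 ^+ n != 0 by rewrite expf_neq0 // gt_eqF.
rewrite expr_div_n; field; rewrite ?mulf_neq0 ?expf_neq0 ?gt_eqF //.
Qed.

Section Aux.
Variables (R : realType) (d : nat) (s : 'I_d -> nat).
Variables (eps eps0 : R) (he : 0 < eps) (he0 : 0 < eps0).
Variable theta : 'I_d -> R.
Definition C : R[i] := ((eps0 / eps)%:C)%C.
Definition theta' : 'I_d -> R := fun j => (eps0 / eps) ^- s j * theta j.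

Lemma xi_scale j : xi s eps theta j = C ^+ s j * xi s eps0 theta' j.
Proof.
rewrite /xi /theta' /C.
rewrite (@alg1 _ eps eps0 (theta j) (s j) he he0).
rewrite -rmorphXn /= !mulrA; congr (_ * _); rewrite [_ * 'i%C]mulrC -mulrA; congr (_ * _).
rewrite -rmorphM /=; congr ((_)%:C)%C.
exact: alg2.
Qed.

Lemma xic_scale j : (xi s eps theta j)^*%C = C ^+ s j * (xi s eps0 theta' j)^*%C.
Proof. rewrite xi_scale rmorphM rmorphXn /C; congr (_ ^+ _ * _). by apply/eqP; rewrite eq_complex /= oppr0 !eqxx. Qed.

Lemma prod_scale (g : 'I_d -> nat) :
  \prod_(j < d) ('i%C * xi s eps theta j) ^+ g j =
  C ^+ mweight s g * \prod_(j < d) ('i%C * xi s eps0 theta' j) ^+ g j.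
Proof.
rewrite /mweight -prodrXr -big_split; apply: eq_bigr => j _.
by rewrite xi_scale mulrCA exprMn exprM.
Qed.

Lemma prodc_scale (g : 'I_d -> nat) :
  \prod_(j < d) ('i%C * (xi s eps theta j)^*%C) ^+ g j =
  C ^+ mweight s g * \prod_(j < d) ('i%C * (xi s eps0 theta' j)^*%C) ^+ g j.
Proof.
rewrite /mweight -prodrXr -big_split; apply: eq_bigr => j _.
by rewrite xic_scale mulrCA exprMn exprM.
Qed.

Lemma Lhat_scale m a : Lhat s m a eps theta = C ^+ m * Lhat s m a eps0 theta'.
Proof.
rewrite /Lhat mulr_sumr; apply: eq_bigr => g _.
rewrite mulr_sumr; apply: eq_bigr => h _.
case: ifP => [/eqP H|_]; last by rewrite mulr0.
rewrite prod_scale prodc_scale.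
have -> : C ^+ m = C ^+ mweight s (fun j => nat_of_ord (g j)) * C ^+ mweight s (fun j => nat_of_ord (h j)) by rewrite -exprD H.
set A := a _ _; set P := \prod_(j < d) _; set Q := \prod_(j < d) _.
set x := C ^+ _; set y := C ^+ _.
ring.
Qed.

Lemma tz_scale : torus_zero s eps0 theta' -> torus_zero s eps theta.
Proof.
move=> H j; have [k Hk] := H j; exists k.
move: Hk; rewrite /theta' => Hk.
have h1 : eps ^+ s j != 0 by rewrite expf_neq0 // gt_eqF.
have h2 : eps0 ^+ s j != 0 by rewrite expf_neq0 // gt_eqF.
have -> : theta j = (eps0 / eps) ^+ s j * ((eps0 / eps) ^- s j * theta j).
  rewrite expr_div_n; field; rewrite ?mulf_neq0 ?expf_neq0 ?gt_eqF //.
rewrite Hk expr_div_n; field; rewrite ?mulf_neq0 ?expf_neq0 ?gt_eqF //.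
Qed.

Lemma C_neq0 m : C ^+ m != 0.
Proof. rewrite expf_neq0 // /C; apply/negP => /eqP [] /eqP; by rewrite mulf_eq0 invr_eq0 !gt_eqF. Qed.
End Aux.

Theorem lemma3p9 (R : realType) (d : nat) (s : 'I_d -> nat)
    (hs : forall j, (0 < s j)%N) (m : nat) (hm : (0 < m)%N)
    (a : ('I_d -> nat) -> ('I_d -> nat) -> R[i]) :
  (exists eps0 : R, 0 < eps0 /\
     forall theta : 'I_d -> R, ~ torus_zero s eps0 theta ->
       Lhat s m a eps0 theta != 0) ->
  forall eps : R, 0 < eps ->
    forall theta : 'I_d -> R, ~ torus_zero s eps theta ->
      Lhat s m a eps theta != 0.
Proof.
move=> [eps0 [he0 H]] eps he theta ntz.
rewrite (@Lhat_scale R d s eps eps0 he he0 theta) mulf_eq0 negb_or (C_neq0 _ _ _ he he0) /=.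
apply: H => tz; exact: ntz (@tz_scale R d s eps eps0 he he0 theta tz).
Qed.
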